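(* Let $k\ge 2$. For every finite simple graph $G$ admitting a closed neighborhood balanced $k$-coloring and every integer $N\ge 0$, there exist a finite simple graph $G'$ containing $G$ as an induced subgraph, a closed neighborhood balanced $k$-coloring $c'$ of $G'$, and a color $a\in\{1,\dots,k\}$ such that $|c'^{-1}(b)|-|c'^{-1}(a)|\ge N$ for every color $b\neq a$. In particular, there exist graphs with closed neighborhood balanced $k$-colorings having arbitrarily fewer vertices of one color than of each of the other $k-1$ colors.
   Context: For a vertex $v$, $N[v]=\{v\}\cup\{u : uv\in E(G)\}$. A closed neighborhood balanced $k$-coloring of $G$ is a map $c: V(G)\to\{1,\dots,k\}$ such that for every vertex $v$ the numbers $|\{u\in N[v] : c(u)=i\}|$, $i=1,\dots,k$, are all equal. *)

(* Defs.v *)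
From mathcomp Require Import all_boot.
Set Implicit Arguments. Unset Strict Implicit. Unset Printing Implicit Defensive.

Definition simple_graph (T : finType) (e : rel T) : Prop :=
  symmetric e /\ irreflexive e.

Definition closed_nbhd (T : finType) (e : rel T) (v : T) : {set T} :=
  [set u | (u == v) || e v u].

(* Colours 1..k are represented by 'I_k = {0,...,k-1}. *)
Definition cnb_coloring (T : finType) (e : rel T) (k : nat) (c : T -> 'I_k) : Prop :=
  forall (v : T) (i j : 'I_k),
    #|[set u in closed_nbhd e v | c u == i]| = #|[set u in closed_nbhd e v | c u == j]|.

Definition induced_embedding (T T' : finType) (e : rel T) (e' : rel T') (f : T -> T') : Prop :=
  injective f /\ forall x y : T, e' (f x) (f y) = e x y.

(* Main.v *)
Require Import Defs.
From mathcomp Require Import all_boot zify.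
Set Implicit Arguments. Unset Strict Implicit. Unset Printing Implicit Defensive.

Section Gadget.
Variables (K M : nat).
Definition Gd := ('I_M * bool * option (bool * 'I_K))%type.

Definition ge (x y : Gd) : bool :=
  match x, y with
  | (m, s, None), (m2, s2, None) => (m == m2) && (s != s2)
  | (m, s, None), (m2, s2, Some _) => (m == m2) && (s == s2)
  | (m, s, Some _), (m2, s2, None) => (m == m2) && (s == s2)
  | (m, s, Some (t, j)), (m2, s2, Some (t2, j2)) =>
      [&& m == m2, s == s2, t == t2 & j != j2]
  end.

Definition gc (x : Gd) : 'I_K.+1 :=
  match x with
  | (_, _, None) => ord0
  | (_, _, Some (_, j)) => lift ord0 j
  end.

Lemma ge_sym : symmetric ge.
Proof.
move=> [[m s] [[t j]|]] [[m2 s2] [[t2 j2]|]] //=;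
  by rewrite ?(eq_sym m) ?(eq_sym s) ?(eq_sym t) ?(eq_sym j).
Qed.

Lemma ge_irr : irreflexive ge.
Proof. by move=> [[m s] [[t j]|]] /=; rewrite !eqxx. Qed.

Lemma some_eqE (A : eqType) (x y : A) : (Some x == Some y) = (x == y).
Proof. by []. Qed.
Lemma none_some (A : eqType) (x : A) : (None == Some x) = false.
Proof. by []. Qed.
Lemma some_none (A : eqType) (x : A) : (Some x == None) = false.
Proof. by []. Qed.

Ltac bsolve :=
  rewrite ?some_eqE ?none_some ?some_none ?xpair_eqE ?some_eqE; rewrite ?(inj_eq (@lift_inj _ ord0)) ?(inj_eq (@Some_inj _)) ?xpair_eqE
          ?(negbTE (neq_lift _ _)) ?(eq_sym (lift _ _) ord0) ?(negbTE (neq_lift _ _));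
  repeat (match goal with |- context [?a == ?b] => is_var a; case: (eqVneq a b) => [?|?]; [subst a|] end);
  rewrite ?eqxx /= ?andbT ?andbF ?orbF ?orbT //.

Lemma gad_bal (v : Gd) : exists d, forall i : 'I_K.+1,
  #|[set u in closed_nbhd ge v | gc u == i]| = d.
Proof.
case: v => [[m s] [[t j]|]].
- exists 1 => i; case: (unliftP ord0 i) => [j2 ->|->]; [move: j2 => /= j2|].
  + rewrite -(cards1 (m, s, Some (t, j2))); apply: eq_card.
    move=> [[m3 s3] [[[] j3]|]]; rewrite !inE /=; bsolve.
  + rewrite -(cards1 (m, s, @None (bool * 'I_K))); apply: eq_card.
    move=> [[m3 s3] [[[] j3]|]]; rewrite !inE /=; bsolve.
- exists 2 => i; case: (unliftP ord0 i) => [j2 ->|->]; [move: j2 => /= j2|].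
  + transitivity #|[set (m, s, Some (true, j2)); (m, s, Some (false, j2))]|; last first.
      rewrite cards2; bsolve.
    apply: eq_card.
    move=> [[m3 s3] [[[] j3]|]]; rewrite !inE /=; bsolve.
  + transitivity #|[set (m, s, @None (bool * 'I_K)); (m, ~~ s, None)]|; last first.
      rewrite cards2; case: s; bsolve.
    apply: eq_card.
    move=> [[m3 []] [[[] j3]|]]; rewrite !inE /=; case: s; bsolve.
Qed.
End Gadget.

Lemma inl_eqE (A B : eqType) (x y : A) : (@inl A B x == inl y) = (x == y).
Proof. by apply/eqP/eqP => [[]|->]. Qed.
Lemma inr_eqE (A B : eqType) (x y : B) : (@inr A B x == inr y) = (x == y).
Proof. by apply/eqP/eqP => [[]|->]. Qed.
Lemma inlr_eqE (A B : eqType) (x : A) (y : B) : (inl x == inr y) = false.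
Proof. by apply/eqP. Qed.
Lemma inrl_eqE (A B : eqType) (x : A) (y : B) : (inr y == inl x) = false.
Proof. by apply/eqP. Qed.

Lemma card_sum_set (A B : finType) (S : {set A + B}) :
  #|S| = #|[set x | inl x \in S]| + #|[set g | inr g \in S]|.
Proof.
rewrite -!sum1_card big_sumType; congr (_ + _); apply: eq_bigl => x; by rewrite inE.
Qed.

Theorem corollary2p14 (k : nat) (hk : 2 <= k)
  (T : finType) (e : rel T) (hG : simple_graph e)
  (hcol : exists c : T -> 'I_k, cnb_coloring e c) (N : nat) :
  exists (T' : finType) (e' : rel T') (f : T -> T') (c' : T' -> 'I_k) (a : 'I_k),
    [/\ simple_graph e', induced_embedding e e' f, cnb_coloring e' c' &
        forall b : 'I_k, b != a ->
          #|[set x | c' x == a]| + N <= #|[set x | c' x == b]| ].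
Proof.
case: k hk hcol => [|[|K]] // _ [c hc].
set M := #|T| + N.
pose e' : rel (T + Gd K.+1 M) := fun x y => match x, y with
  | inl a, inl b => e a b | inr a, inr b => ge a b | _, _ => false end.
pose c' : T + Gd K.+1 M -> 'I_K.+2 := fun x => match x with
  | inl a => c a | inr g => gc g end.
case: hG => hsym hirr.
exists (T + Gd K.+1 M)%type, e', inl, c', ord0; split.
- split.
  + move=> [x|x] [y|y] //=; exact: ge_sym.
  + move=> [x|x] /=. exact: hirr. exact: ge_irr.
- split. move=> x y. case. done. 
  move=> x y. reflexivity.
- move=> v i j; rewrite (card_sum_set [set u in _ | c' u == i]) (card_sum_set [set u in _ | c' u == j]).
  case: v => [t|g].
  + have L1 i0 : [set x | inl x \in [set u in closed_nbhd e' (inl t) | c' u == i0]]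
        = [set x in closed_nbhd e t | c x == i0].
      by apply/setP => x; rewrite !inE inl_eqE.
    have L2 i0 : [set x | inr x \in [set u in closed_nbhd e' (inl t) | c' u == i0]] = set0.
      by apply/setP => x; rewrite !inE inrl_eqE.
    by rewrite !L1 !L2 (hc t i j).
  + have L1 i0 : [set x | inr x \in [set u in closed_nbhd e' (inr g) | c' u == i0]]
        = [set x in closed_nbhd (@ge K.+1 M) g | gc x == i0].
      by apply/setP => x; rewrite !inE inr_eqE.
    have L2 i0 : [set x | inl x \in [set u in closed_nbhd e' (inr g) | c' u == i0]] = set0.
      by apply/setP => x; rewrite !inE inlr_eqE.
    have [d hd] := gad_bal g.
    by rewrite !L1 !L2 !hd.
- move=> b hb; case: (unliftP ord0 b) hb => [j ->|->]; last by rewrite eqxx.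
  move: j => /= j _; rewrite !card_sum_set.
  set f0 := fun p : 'I_M * bool => (p.1, p.2, @None (bool * 'I_K.+1)).
  set f1 := fun p : 'I_M * bool * bool => (p.1.1, p.1.2, Some (p.2, j)).
  have h0 : #|[set g | inr g \in [set x | c' x == ord0]]| <= M * 2.
    apply: leq_trans (_ : #|image f0 predT| <= _); last first.
      by apply: leq_trans (leq_image_card _ _) _; rewrite card_prod card_ord card_bool.
    apply: subset_leq_card; apply/subsetP => -[[m s] [[t j2]|]]; rewrite !inE /=.
      by rewrite eq_sym (negbTE (neq_lift _ _)).
    by move=> _; apply/imageP; exists (m, s).
  have h1 : M * 2 * 2 <= #|[set g | inr g \in [set x | c' x == lift ord0 j]]|.
    have -> : M * 2 * 2 = #|image f1 predT|.
      rewrite card_image ?card_prod ?card_ord ?card_bool //.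
      by move=> [[m s] t] [[m2 s2] t2] [-> -> ->].
    apply: subset_leq_card; apply/subsetP => g /imageP [[[m s] t] _ ->].
    by rewrite !inE /=.
  have hT : #|[set x | inl x \in [set x | c' x == ord0]]| <= #|T| := max_card _.
  apply: leq_trans (_ : #|T| + M * 2 + N <= _); first by rewrite leq_add2r leq_add.
  apply: leq_trans (leq_addl _ _); apply: leq_trans h1.
  rewrite /M; move: #|T| => nT; lia.
Qed.
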